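(* In the search algorithm described in the context (with non-negative edge costs and a consistent heuristic), let $l$ be a label at the moment it is extracted from OPEN, and let $l'\in\alpha(v(l))$ be any label in the current frontier set at $v(l)$. Then $\vec g(l')\le\vec g(l)$ if and only if $p(\vec g(l'))\le p(\vec g(l))$.
   Context: $p:\mathbb{R}^M\to\mathbb{R}^{M-1}$ is the projection removing the first component of a vector. Graph $G=(V,E,\vec c)$ is directed, with $\vec c(e)\in(\mathbb{R}^+)^M$ for every edge. Start vertex $v_o$, destination $v_d$. A heuristic $\vec h:V\to(\mathbb{R}^+)^M$ is consistent if $\vec h(v)\le\vec h(u)+\vec c(u,v)$ componentwise for every edge $(u,v)$, and $\vec h(v_d)=\vec 0$. A label is a pair $l=(v(l),\vec g(l))$ with $v(l)\in V$, $\vec g(l)\in(\mathbb{R}^+)^M$; $\vec f(l)=\vec g(l)+\vec h(v(l))$. For $a,b$ vectors, $a\le b$ means componentwise $\le$; $a$ dominates $b$ iff $a\le b$ and $a\ne b$. OPEN is a priority queue of labels ordered by lexicographic order of $\vec f$. Each vertex $v$ has a frontier set $\alpha(v)$ of labels at $v$. Algorithm: initialize OPEN $=\{(v_o,\vec 0)\}$, $\alpha(v)=\emptyset$ for all $v$. While OPEN is nonempty: extract from OPEN a label $l$ with lexicographically minimal $\vec f(l)$. If FrontierCheck($l$) (there is $l'\in\alpha(v(l))$ with $\vec g(l')\le\vec g(l)$) or SolutionCheck($l$) (there is $l^*\in\alpha(v_d)$ with $\vec g(l^* )\le\vec f(l)$) holds, discard $l$ and continue. Otherwise UpdateFrontier($l$):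 remove from $\alpha(v(l))$ all labels whose $\vec g$ is dominated by $\vec g(l)$, then add $l$ to $\alpha(v(l))$. If $v(l)=v_d$, continue. Otherwise expand $l$: for each edge $(v(l),v')\in E$, form $l'=(v',\vec g(l)+\vec c(v(l),v'))$; if FrontierCheck($l'$) or SolutionCheck($l'$) holds discard $l'$, else insert $l'$ into OPEN. On termination return $\alpha(v_d)$. *)

(* Defs.v *)
From mathcomp Require Import all_boot all_order all_algebra.
Set Implicit Arguments. Unset Strict Implicit. Unset Printing Implicit Defensive.
Import Order.TTheory GRing.Theory Num.Theory.
Local Open Scope ring_scope.

Section Search.
Variable R : realFieldType.

Definition vec (n : nat) := {ffun 'I_n -> R}.

Definition vadd n (a b : vec n) : vec n := [ffun i => a i + b i].
Definition vle n (a b : vec n) : bool := [forall i, a i <= b i].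
Definition vdom n (a b : vec n) : bool := vle a b && (a != b).
Definition lexle n (a b : vec n) : Prop :=
  (forall i, a i = b i) \/
  exists i : 'I_n, (forall j : 'I_n, (j < i)%N -> a j = b j) /\ a i < b i.
Definition proj1v M (a : vec M.+1) : vec M := [ffun i => a (lift ord0 i)].

Variables (V : finType) (M : nat).
(* number of objectives is M.+1 *)
Definition cvec := vec M.+1.
Variables (E : rel V) (c : V -> V -> cvec) (h : V -> cvec) (vo vd : V).

Definition label := (V * cvec)%type.
Definition lv (l : label) : V := l.1.
Definition lg (l : label) : cvec := l.2.
Definition lf (l : label) : cvec := vadd (lg l) (h (lv l)).

Record state := State { open : seq label; alpha : V -> seq label }.

Definition frontier_check (al : V -> seq label) (l : label) : bool :=
  has (fun l' => vle (lg l') (lg l)) (al (lv l)).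
Definition solution_check (al : V -> seq label) (l : label) : bool :=
  has (fun ls => vle (lg ls) (lf l)) (al vd).
Definition pruned al l := frontier_check al l || solution_check al l.

Definition update_frontier (al : V -> seq label) (l : label) : V -> seq label :=
  fun w => if w == lv l then
             rcons [seq l'' <- al w | ~~ vdom (lg l) (lg l'')] l
           else al w.

Definition children (l : label) : seq label :=
  [seq (v', vadd (lg l) (c (lv l) v')) | v' <- enum V & E (lv l) v'].

Definition lexmin_in (op : seq label) (l : label) : Prop :=
  l \in op /\ forall l2, l2 \in op -> lexle (lf l) (lf l2).

(* one iteration of the main loop: extract l = the element between o1 and o2 *)
Inductive step : state -> state -> Prop :=
| step_discard o1 o2 l al :
    lexmin_in (o1 ++ l :: o2) l -> pruned al l ->
    step (State (o1 ++ l :: o2) al) (State (o1 ++ o2) al)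
| step_goal o1 o2 l al :
    lexmin_in (o1 ++ l :: o2) l -> ~~ pruned al l -> lv l = vd ->
    step (State (o1 ++ l :: o2) al) (State (o1 ++ o2) (update_frontier al l))
| step_expand o1 o2 l al :
    lexmin_in (o1 ++ l :: o2) l -> ~~ pruned al l -> lv l != vd ->
    step (State (o1 ++ l :: o2) al)
         (State (o1 ++ o2 ++ [seq l' <- children l |
                               ~~ pruned (update_frontier al l) l'])
                (update_frontier al l)).

Definition init_state : state :=
  State [:: (vo, [ffun=> 0])] (fun _ => [::]).

Inductive reachable : state -> Prop :=
| reach_init : reachable init_state
| reach_step s s' : reachable s -> step s s' -> reachable s'.

End Search.

(* Main.v *)
Require Import Defs.
From mathcomp Require Import all_boot all_order all_algebra.
Import Order.TTheory GRing.Theory Num.Theory.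
Local Open Scope ring_scope.
Set Implicit Arguments.

Definition inv (R : realFieldType) (V : finType) (M : nat) (h : V -> cvec R M)
  (s : state R V M) : Prop :=
  forall w x, x \in alpha s w -> lv x = w /\
    forall y, y \in open s -> lf h x ord0 <= lf h y ord0.

Lemma lexle0 (R : realFieldType) n (a b : vec R n.+1) : lexle a b -> a ord0 <= b ord0.
Proof.
case=> [->//|[i [Hj Hi]]].
case: (posnP i) => [i0|ip].
  have -> : ord0 = i by apply: val_inj.
  exact: ltW.
by rewrite Hj.
Qed.

Lemma inv_reach (R : realFieldType) (V : finType) (M : nat)
  (E : rel V) (c : V -> V -> cvec R M) (h : V -> cvec R M) (vo vd : V)
  (h_consistent : forall u v, E u v -> vle (h u) (vadd (c u v) (h v)))
  s : reachable E c h vo vd s -> inv h s.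
Proof.
elim=> [|s0 s1 _ IH st].
  by move=> w x.
case: st IH => [o1 o2 l al [lin lmin] _ | o1 o2 l al [lin lmin] _ _ | o1 o2 l al [lin lmin] _ _] IH.
- move=> w x /= xin; have [-> H] := IH w x xin; split=> // y yin.
  apply: H => /=; move: yin; rewrite !mem_cat in_cons => /orP[->|->]; rewrite ?orbT //.
- move=> w x /=; rewrite /update_frontier.
  case: eqP => [->|ne].
    rewrite mem_rcons in_cons => /orP[/eqP->|].
      split=> // y yin; apply: lexle0; apply: lmin => /=.
      by move: yin; rewrite !mem_cat in_cons => /orP[->|->]; rewrite ?orbT.
    rewrite mem_filter => /andP[_ xin]; have [-> H] := IH _ x xin; split=> // y yin.
    by apply: H => /=; move: yin; rewrite !mem_cat in_cons => /orP[->|->]; rewrite ?orbT.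
  move=> xin; have [-> H] := IH w x xin; split=> // y yin.
  by apply: H => /=; move: yin; rewrite !mem_cat in_cons => /orP[->|->]; rewrite ?orbT.
- have Hl : forall x, x \in al (lv l) -> lf h x ord0 <= lf h l ord0.
    by move=> x xin; have [_ H] := IH _ x xin; apply: H; rewrite /= mem_cat in_cons eqxx orbT.
  have Hch : forall y, y \in children E c l -> lf h l ord0 <= lf h y ord0.
    move=> y /mapP[v' ]; rewrite mem_filter => /andP[Ev _] ->.
    have /forallP/(_ ord0) := h_consistent _ _ Ev.
    rewrite /lf /lv /lg /vadd /= !ffunE /= => H.
    by rewrite -addrA lerD2l.
  have Hrest : forall y, y \in (o1 ++ o2 ++ [seq l' <- children E c l |
      ~~ pruned h vd (update_frontier al l) l']) ->
      (lf h l ord0 <= lf h y ord0) /\ (y \in o1 ++ l :: o2 \/ y \in children E c l).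
    move=> y Hy; rewrite !mem_cat mem_filter in Hy; move: Hy => /orP[y1|/orP[y2|/andP[_ y3]]].
    + have yo : y \in o1 ++ l :: o2 by rewrite mem_cat y1.
      split; [apply: lexle0; exact: lmin | by left].
    + have yo : y \in o1 ++ l :: o2 by rewrite mem_cat in_cons y2 !orbT.
      split; [apply: lexle0; exact: lmin | by left].
    + by split; [apply: Hch | right].
  move=> w x /=; rewrite /update_frontier.
  case: eqP => [->|ne].
    rewrite mem_rcons in_cons => /orP[/eqP->|].
      by split=> // y /Hrest [].
    rewrite mem_filter => /andP[_ xin]; have [-> H] := IH _ x xin; split=> // y /Hrest [Hy [yo|yc]].
      by apply: H.
    exact: le_trans (Hl _ xin) Hy.
  move=> xin; have [-> H] := IH w x xin; split=> // y /Hrest [Hy [yo|yc]].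
    by apply: H.
  apply: le_trans Hy; apply: H; by rewrite /= mem_cat in_cons eqxx orbT.
Qed.

Theorem corollary2 (R : realFieldType) (V : finType) (M : nat)
  (E : rel V) (c : V -> V -> cvec R M) (h : V -> cvec R M) (vo vd : V)
  (c_nonneg : forall u v, E u v -> forall i, 0 <= c u v i)
  (h_nonneg : forall v i, 0 <= h v i)
  (h_consistent : forall u v, E u v -> vle (h u) (vadd (c u v) (h v)))
  (h_goal : h vd = [ffun=> 0])
  (s : state R V M)
  (Hreach : reachable E c h vo vd s)
  (l : label R V M)
  (Hext : lexmin_in h (open s) l)
  (l' : label R V M)
  (Hl' : l' \in alpha s (lv l)) :
  vle (lg l') (lg l) <-> vle (proj1v (lg l')) (proj1v (lg l)).
Proof.
have [Hv H] := inv_reach h_consistent Hreach _ _ Hl'.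
have := H l (proj1 Hext); rewrite /lf /vadd !ffunE Hv lerD2r => H0.
split.
  move=> /forallP Hle; apply/forallP => i; rewrite !ffunE; exact: Hle.
move=> /forallP Hle; apply/forallP => i.
case: (unliftP ord0 i) => [j ->|->] //.
by have := Hle j; rewrite !ffunE.
Qed.
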